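(* Let $p$ be a prime and $n,k$ natural numbers with $n+1<p$ and $k<p$. Let $(A,+,\circ)$ be a strongly nilpotent brace of cardinality $p^n$ with nilpotency index $k$. Let $\gamma$ be a primitive root modulo $p^p$, $\xi=\gamma^{p^{p-1}}$, and define $a\cdot b=\sum_{i=0}^{p-2}\xi^{p-1-i}((\xi^i a)*b)$ for $a,b\in A$. Then $(a+b)\cdot c=a\cdot c+b\cdot c$ and $a\cdot(b+c)=a\cdot b+a\cdot c$ for all $a,b,c\in A$.
   Context: A (left) brace is a set $A$ with binary operations $+,\circ$ such that $(A,+)$ is an abelian group, $(A,\circ)$ is a group, and $a\circ(b+c)+a=a\circ b+a\circ c$ for all $a,b,c$. Write $a*b=a\circ b-a-b$. For additive subgroups $X,Y$, $X*Y$ is the additive subgroup generated by all $x*y$. Set $A^{[1]}=A$, $A^{[i+1]}=\sum_{j=1}^{i}A^{[j]}*A^{[i+1-j]}$. The brace is strongly nilpotent if $A^{[m]}=0$ for some $m$ and has nilpotency index $k$ if $A^{[k]}=0\neq A^{[k-1]}$. For an integer $m$ and $a\in A$, $ma$ denotes the $m$-fold additive multiple (so $\xi^i a$ is the sum of $\xi^i$ copies of $a$). *)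

(* Defs.v *)
From mathcomp Require Import all_boot all_algebra.
Set Implicit Arguments. Unset Strict Implicit. Unset Printing Implicit Defensive.
Import GRing.Theory.
Local Open Scope ring_scope.

Definition is_brace (A : zmodType) (circ : A -> A -> A) : Prop :=
  [/\ (forall a b c, circ a (circ b c) = circ (circ a b) c),
      (exists e : A, (forall a, circ e a = a /\ circ a e = a) /\
                     (forall a, exists a', circ a a' = e /\ circ a' a = e))
    & (forall a b c, circ a (b + c) + a = circ a b + circ a c)].

Definition bstar (A : zmodType) (circ : A -> A -> A) (a b : A) : A :=
  circ a b - a - b.

Inductive addgen (A : zmodType) (S : A -> Prop) : A -> Prop :=
| addgen_in : forall x, S x -> addgen S x
| addgen_0 : addgen S 0
| addgen_add : forall x y, addgen S x -> addgen S y -> addgen S (x + y)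
| addgen_opp : forall x, addgen S x -> addgen S (- x).

Definition bstar_set (A : zmodType) (circ : A -> A -> A) (X Y : A -> Prop) :
  A -> Prop :=
  addgen (fun z => exists x y, [/\ X x, Y y & z = bstar circ x y]).

(* bpow_aux circ m i = A^[i] for 1 <= i <= m.+1. *)
Fixpoint bpow_aux (A : zmodType) (circ : A -> A -> A) (m : nat) : nat -> A -> Prop :=
  match m with
  | 0 => fun _ _ => True
  | m'.+1 => fun i =>
      if (i <= m'.+1)%N then bpow_aux circ m' i
      else addgen (fun x => exists j, [/\ (1 <= j)%N, (j <= m'.+1)%N &
                   bstar_set circ (bpow_aux circ m' j)
                                  (bpow_aux circ m' (m'.+2 - j)) x])
  end.

(* A^[i] ; A^[1] = A (and by convention A^[0] = A). *)
Definition bpow (A : zmodType) (circ : A -> A -> A) (i : nat) : A -> Prop :=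
  bpow_aux circ i i.

Definition is_zero_set (A : zmodType) (X : A -> Prop) : Prop :=
  forall x, X x -> x = 0.

Definition strongly_nilpotent (A : zmodType) (circ : A -> A -> A) : Prop :=
  exists m, is_zero_set (bpow circ m).

Definition nilpotency_index (A : zmodType) (circ : A -> A -> A) (k : nat) : Prop :=
  is_zero_set (bpow circ k) /\ ~ is_zero_set (bpow circ k.-1).

Definition primitive_root_mod (m g : nat) : Prop :=
  coprime g m /\
  (forall j, (0 < j)%N -> (j < totient m)%N -> (g ^ j %% m <> 1 %% m)%N).

Definition bdot (A : zmodType) (circ : A -> A -> A) (p xi : nat) (a b : A) : A :=
  \sum_(i < p.-1) (bstar circ (a *+ (xi ^ i)%N) b) *+ (xi ^ (p.-1 - i))%N.

(* Main.v *)
Require Import Defs.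
From mathcomp Require Import all_boot all_algebra.
From mathcomp Require Import zify.
Import GRing.Theory.
Local Open Scope ring_scope.
Set Implicit Arguments. Unset Strict Implicit.

Lemma subBB (B : zmodType) (h c d : B) : h - c - (h - d) = d - c.
Proof. by rewrite opprB addrC addrA subrK. Qed.

Section Brace.
Variable A : zmodType.
Variable circ : A -> A -> A.
Hypothesis Hb : is_brace circ.

Definition lam (x y : A) := circ x y - x.
Local Notation st := (bstar circ).

Lemma circ_law x y z : circ x (y + z) = circ x y + circ x z - x.
Proof. by case: Hb => _ _ H; rewrite -H addrK. Qed.

Lemma circ_assoc x y z : circ x (circ y z) = circ (circ x y) z.
Proof. by case: Hb. Qed.

Lemma circ0r x : circ x 0 = x.
Proof.
have H := circ_law x 0 0; rewrite addr0 in H.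
have := congr1 (fun t => t - circ x 0) H; rewrite subrr addrAC addrK.
by move/eqP; rewrite eq_sym subr_eq0 => /eqP.
Qed.

Lemma circ0l x : circ 0 x = x.
Proof.
case: Hb => _ [e [He _]] _.
have e0 : e = 0 by case: (He 0) => H1 _; rewrite -[e]circ0r.
by case: (He x); rewrite e0.
Qed.

Lemma circ_inv x : exists x', circ x x' = 0 /\ circ x' x = 0.
Proof.
case: Hb => _ [e [He Hi]] _.
have e0 : e = 0 by case: (He 0) => H1 _; rewrite -[e]circ0r.
by case: (Hi x) => x' [H1 H2]; exists x'; rewrite -e0.
Qed.

Lemma lamD x y z : lam x (y + z) = lam x y + lam x z.
Proof. by rewrite /lam circ_law -addrA addrACA. Qed.

Lemma lam0 x : lam x 0 = 0.
Proof. by rewrite /lam circ0r subrr. Qed.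

Lemma lamN x y : lam x (- y) = - lam x y.
Proof. by apply/eqP; rewrite -subr_eq0 opprK -lamD addNr lam0. Qed.

Lemma lamB x y z : lam x (y - z) = lam x y - lam x z.
Proof. by rewrite lamD lamN. Qed.

Lemma lamMn x y m : lam x (y *+ m) = lam x y *+ m.
Proof. by elim: m => [|m IH]; rewrite ?lam0 // !mulrS lamD IH. Qed.

Lemma lamMz x y (z : int) : lam x (y *~ z) = lam x y *~ z.
Proof. by case: z => m; rewrite ?NegzE ?mulrNz -!pmulrn ?lamN lamMn. Qed.

Lemma lam_sum x I (r : seq I) (P : pred I) (F : I -> A) :
  lam x (\sum_(i <- r | P i) F i) = \sum_(i <- r | P i) lam x (F i).
Proof. by elim/big_rec2: _ => [|i y1 y2 _ <-]; rewrite ?lam0 // lamD. Qed.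

Lemma stE x y : st x y = lam x y - y.
Proof. by []. Qed.

Lemma stD x y z : st x (y + z) = st x y + st x z.
Proof. by rewrite !stE lamD opprD addrACA. Qed.

Lemma st0 x : st x 0 = 0.
Proof. by rewrite stE lam0 subr0. Qed.

Lemma stN x y : st x (- y) = - st x y.
Proof. by rewrite !stE lamN opprB opprK addrC. Qed.

Lemma stB x y z : st x (y - z) = st x y - st x z.
Proof. by rewrite stD stN. Qed.

Lemma stMn x y m : st x (y *+ m) = st x y *+ m.
Proof. by elim: m => [|m IH]; rewrite ?st0 // !mulrS stD IH. Qed.

Lemma stMz x y (z : int) : st x (y *~ z) = st x y *~ z.
Proof. by case: z => m; rewrite ?NegzE ?mulrNz -!pmulrn ?stN stMn. Qed.

Lemma st_sum x I (r : seq I) (P : pred I) (F : I -> A) :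
  st x (\sum_(i <- r | P i) F i) = \sum_(i <- r | P i) st x (F i).
Proof. by elim/big_rec2: _ => [|i y1 y2 _ <-]; rewrite ?st0 // stD. Qed.

Lemma st0l w : st 0 w = 0.
Proof. by rewrite stE /lam circ0l subr0 subrr. Qed.

Lemma lamE x w : lam x w = w + st x w.
Proof. by rewrite stE addrC subrK. Qed.

Lemma lam_circ x y w : lam (circ x y) w = lam x (lam y w).
Proof.
rewrite lamB /lam circ_assoc.
by rewrite opprB addrA subrK.
Qed.

Lemma circE x y : circ x y = x + lam x y.
Proof. by rewrite /lam addrC subrK. Qed.

Lemma st_sumf x z h w : lam x z = h -> st (x + h) w = st x w + lam x (st z w).
Proof.
move=> <-; rewrite -circE !stE lam_circ (lamB x (lam z w) w).
by rewrite [RHS]addrC addrA subrK.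
Qed.

Lemma lam_inv x x' w : circ x x' = 0 -> lam x (lam x' w) = w.
Proof. by move=> H; rewrite -lam_circ H /lam circ0l subr0. Qed.

End Brace.

Section Layers.
Variable A : zmodType.
Variable circ : A -> A -> A.
Local Notation st := (bstar circ).
Local Notation L := (bpow circ).

Lemma addgen_sub (S P : A -> Prop) : P 0 -> (forall x y, P x -> P y -> P (x + y)) ->
  (forall x, P x -> P (- x)) -> (forall x, S x -> P x) -> forall x, addgen S x -> P x.
Proof. by move=> P0 PD PN PS x; elim=> //; auto. Qed.

Lemma bpow_auxE m m' i : (0 < i)%N -> (i <= m.+1)%N -> (m <= m')%N ->
  bpow_aux circ m' i = bpow_aux circ m i.
Proof.
move=> i0 im; elim: m' => [|m' IH]; first by rewrite leqn0 => /eqP ->.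
rewrite leq_eqVlt => /orP [/eqP -> //|]; rewrite ltnS => mm'.
have im' : (i <= m'.+1)%N by apply: leq_trans im _; rewrite ltnS.
by rewrite /= im' IH.
Qed.

Lemma bpowE i : (0 < i)%N -> L i = bpow_aux circ i.-1 i.
Proof. by case: i => // i _; rewrite /bpow /= leqnn. Qed.

Lemma bpowSS s : L s.+2 = addgen (fun x => exists j, [/\ (1 <= j)%N, (j <= s.+1)%N &
                   bstar_set circ (bpow_aux circ s j) (bpow_aux circ s (s.+2 - j)) x]).
Proof. by rewrite bpowE //= ltnn. Qed.

Lemma bpow_auxL s j : (0 < j)%N -> (j <= s.+1)%N -> bpow_aux circ s j = L j.
Proof. by move=> j0 js; rewrite bpowE // (@bpow_auxE j.-1 s j) // ?prednK // -ltnS prednK. Qed.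

Lemma L01 s x : (s <= 1)%N -> L s x.
Proof. by case: s => [|[|]]. Qed.

Lemma L0 s : L s 0.
Proof. by case: s => [|[|s]] //; rewrite bpowSS; apply: addgen_0. Qed.

Lemma LD s x y : L s x -> L s y -> L s (x + y).
Proof. by case: s => [|[|s]] //; rewrite bpowSS; apply: addgen_add. Qed.

Lemma LN s x : L s x -> L s (- x).
Proof. by case: s => [|[|s]] //; rewrite bpowSS; apply: addgen_opp. Qed.

Lemma LB s x y : L s x -> L s y -> L s (x - y).
Proof. by move=> Hx Hy; apply: LD => //; apply: LN. Qed.

Lemma LMn s x m : L s x -> L s (x *+ m).
Proof. by move=> Hx; elim: m => [|m IH]; [rewrite mulr0n; apply: L0 | rewrite mulrS; apply: LD]. Qed.

Lemma LMz s x (z : int) : L s x -> L s (x *~ z).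
Proof. by move=> Hx; case: z => m; rewrite ?NegzE ?mulrNz -!pmulrn; [apply: LMn | apply: LN; apply: LMn]. Qed.

Lemma Lsum s I (r : seq I) (P : pred I) (F : I -> A) :
  (forall i, P i -> L s (F i)) -> L s (\sum_(i <- r | P i) F i).
Proof. by move=> H; elim/big_rec: _ => [|i y Pi Hy]; [apply: L0 | apply: LD; auto]. Qed.

Lemma Lmul_pos i j x y : (0 < i)%N -> (0 < j)%N -> L i x -> L j y -> L (i + j) (st x y).
Proof.
case: i => // i; case: j => // j _ _ Hx Hy.
have -> : (i.+1 + j.+1 = (i + j).+2)%N by lia.
rewrite bpowSS; apply: addgen_in; exists i.+1; split => //; first by lia.
have -> : ((i + j).+2 - i.+1 = j.+1)%N by lia.
rewrite !bpow_auxL //; try lia.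
by apply: addgen_in; exists x, y.
Qed.

Lemma Lmono s x : L s.+1 x -> L s x.
Proof.
suff H : forall N s, (s <= N)%N -> forall x, L s.+1 x -> L s x by apply: (H s).
elim=> [|N IH] [|[|s']] //= sN x0.
rewrite bpowSS; apply: (addgen_sub (P := L s'.+2)).
- exact: L0.
- exact: LD.
- exact: LN.
move=> x1 [j [j1 js]]; rewrite !bpow_auxL //; try lia.
apply: (addgen_sub (P := L s'.+2)).
- exact: L0.
- exact: LD.
- exact: LN.
move=> _ [x2 [y2 [Hx Hy ->]]].
have [jl|je] := ltnP j s'.+2.
  have Hy' : L (s'.+2 - j)%N y2.
    apply: (IH (s'.+2 - j)%N); first by lia.
    by have -> : ((s'.+2 - j).+1 = s'.+3 - j)%N by lia.
  have j0 : (0 < s'.+2 - j)%N by lia.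
  have := Lmul_pos j1 j0 Hx Hy'.
  by rewrite (_ : (j + (s'.+2 - j) = s'.+2)%N) //; lia.
have ej : j = s'.+2 by lia.
subst j.
have Hx' : L s'.+1 x2 by apply: IH => //; lia.
have := Lmul_pos (i := s'.+1) (j := 1) _ _ Hx'; rewrite addn1; apply => //.
Qed.

Lemma Lle s s' x : (s <= s')%N -> L s' x -> L s x.
Proof.
move=> ss'; rewrite -(subnKC ss'); elim: (s' - s)%N => [|d IH]; first by rewrite addn0.
by rewrite addnS => /Lmono; apply: IH.
Qed.

Lemma Lmul i j x y : L i x -> L j y -> L (i + j) (st x y).
Proof.
move=> Hx Hy.
have Hx' : L (maxn i 1) x by case: i Hx => [|i] //; rewrite maxnE.
have Hy' : L (maxn j 1) y by case: j Hy => [|j] //; rewrite maxnE.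
apply: (Lle (s' := maxn i 1 + maxn j 1)); first by lia.
by apply: Lmul_pos => //; lia.
Qed.

Lemma Liter s j r x h : L s x -> L j h -> L (j + r * s) (iter r (st x) h).
Proof.
move=> Hx Hh; elim: r => [|r IH]; first by rewrite mul0n addn0.
rewrite iterS; have -> : (j + r.+1 * s = s + (j + r * s))%N by rewrite mulSn; lia.
exact: Lmul.
Qed.

End Layers.

Section UPoly.
Variable A : zmodType.
Variable S : A -> Prop.
Hypothesis S0 : S 0.
Hypothesis SD : forall x y, S x -> S y -> S (x + y).
Hypothesis SN : forall x, S x -> S (- x).

Lemma SMn x c : S x -> S (x *+ c).
Proof. by move=> Hx; elim: c => [|c IH]; [rewrite mulr0n | rewrite mulrS; apply: SD]. Qed.

Inductive UP (t : nat) : (nat -> A) -> Prop :=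
| UMono w r : S w -> (r <= t)%N -> UP t (fun N => w *+ (N ^ r)%N)
| UAdd g h : UP t g -> UP t h -> UP t (fun N => g N + h N)
| UExt g h : (forall N, g N = h N) -> UP t g -> UP t h.

Lemma UP_le t t' g : (t <= t')%N -> UP t g -> UP t' g.
Proof.
move=> tt'; elim=> [w r Sw rt|g1 h1 _ H1 _ H2|g1 h1 E _ H].
- by apply: UMono => //; apply: leq_trans tt'.
- exact: UAdd.
- exact: UExt E H.
Qed.

Lemma UP_scale t g c : UP t g -> UP t (fun N => g N *+ c).
Proof.
elim=> [w r Sw rt|g1 h1 _ H1 _ H2|g1 h1 E _ H].
- apply: (UExt (g := fun N => (w *+ c) *+ (N ^ r)%N)); last by apply: UMono => //; apply: SMn.
  by move=> N; rewrite -!mulrnA mulnC.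
- by apply: (UExt _ (UAdd H1 H2)) => N; rewrite mulrnDl.
- by apply: (UExt _ H) => N; rewrite E.
Qed.

Lemma UP_neg t g : UP t g -> UP t (fun N => - g N).
Proof.
elim=> [w r Sw rt|g1 h1 _ H1 _ H2|g1 h1 E _ H].
- apply: (UExt (g := fun N => (- w) *+ (N ^ r)%N)); last by apply: UMono => //; apply: SN.
  by move=> N; rewrite mulNrn.
- by apply: (UExt _ (UAdd H1 H2)) => N; rewrite opprD.
- by apply: (UExt _ H) => N; rewrite E.
Qed.

Lemma UP_mulN t g : UP t g -> UP t.+1 (fun N => g N *+ N).
Proof.
elim=> [w r Sw rt|g1 h1 _ H1 _ H2|g1 h1 E _ H].
- apply: (UExt (g := fun N => w *+ (N ^ r.+1)%N)); last by apply: UMono.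
  by move=> N; rewrite -mulrnA expnSr.
- by apply: (UExt _ (UAdd H1 H2)) => N; rewrite mulrnDl.
- by apply: (UExt _ H) => N; rewrite E.
Qed.

Variable p : nat.
Hypothesis Hinv : forall t, (0 < t < p)%N -> exists M, forall v : A, v *+ (t * M) = v.

Lemma UP_bin t v : (t < p)%N -> S v -> UP t (fun N => v *+ 'C(N, t)).
Proof.
elim: t v => [|t IH] v tp Sv.
  by apply: (UExt (g := fun N => v *+ (N ^ 0)%N)) => [N|]; [rewrite bin0 expn0 | apply: UMono].
have [M HM] := Hinv (t := t.+1) (ltac:(lia)).
have H1 := IH (v *+ M) (ltnW tp) (SMn _ Sv).
apply: (UExt (g := fun N => (v *+ M) *+ 'C(N, t) *+ N + - ((v *+ M) *+ 'C(N, t) *+ t))).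
  move=> N; rewrite -[in RHS](HM v) -[in RHS]mulrnA mulnAC mul_bin_left !mulnBl mulrnBr.
    by rewrite -!mulrnA; congr (_ *+ _ - _ *+ _); nia.
  have [tN|Nt] := leqP t N; first by rewrite leq_mul2r leq_mul2r tN !orbT.
  by rewrite bin_small // !muln0 !mul0n.
apply: UAdd; first exact: UP_mulN.
by apply: UP_neg; apply: UP_le (leqnSn t) _; apply: UP_scale.
Qed.

End UPoly.

Section BPoly.
Variable A : zmodType.
Variable circ : A -> A -> A.
Local Notation st := (bstar circ).
Local Notation L := (bpow circ).
Hypothesis Hb : is_brace circ.

Inductive BPoly (i d : nat) : (nat -> nat -> A) -> Prop :=
| PMono u a b : L (i + a + b)%N u -> L d u -> BPoly i d (fun m l => u *+ (m ^ a * l ^ b)%N)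
| PAdd F G : BPoly i d F -> BPoly i d G -> BPoly i d (fun m l => F m l + G m l)
| PExt F G : (forall m l, F m l = G m l) -> BPoly i d F -> BPoly i d G.

Lemma PolyZ i d F : (forall m l, F m l = 0) -> BPoly i d F.
Proof.
move=> H; apply: (PExt (F := fun m l => 0 *+ (m ^ 0 * l ^ 0)%N)); first by move=> m l; rewrite mul0rn H.
by apply: PMono; apply: L0.
Qed.

Lemma Poly_const i d v : L i v -> L d v -> BPoly i d (fun _ _ => v).
Proof.
move=> H1 H2; apply: (PExt (F := fun m l => v *+ (m ^ 0 * l ^ 0)%N)) => //.
by apply: PMono => //; rewrite !addn0.
Qed.

Lemma Poly_le i d i' d' F : (i' <= i)%N -> (d' <= d)%N -> BPoly i d F -> BPoly i' d' F.
Proof.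
move=> ii dd; elim=> [u a b H1 H2|F1 G1 _ H1 _ H2|F1 G1 E _ H].
- by apply: PMono; [apply: Lle H1; lia | apply: Lle H2].
- exact: PAdd.
- exact: PExt E H.
Qed.

Lemma Poly_val i d F m l : BPoly i d F -> L i (F m l) /\ L d (F m l).
Proof.
elim=> [u a b H1 H2|F1 G1 _ [H1 H1'] _ [H2 H2']|F1 G1 E _ [H H']].
- by split; apply: LMn => //; apply: Lle H1; lia.
- by split; apply: LD.
- by rewrite -E.
Qed.

Lemma PolyN i d F : BPoly i d F -> BPoly i d (fun m l => - F m l).
Proof.
elim=> [u a b H1 H2|F1 G1 _ H1 _ H2|F1 G1 E _ H].
- apply: (PExt (F := fun m l => (- u) *+ (m ^ a * l ^ b)%N)); first by move=> m l; rewrite mulNrn.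
  by apply: PMono; apply: LN.
- by apply: (PExt _ (PAdd H1 H2)) => m l; rewrite opprD.
- by apply: (PExt _ H) => m l; rewrite E.
Qed.

Lemma PolyB i d F G : BPoly i d F -> BPoly i d G -> BPoly i d (fun m l => F m l - G m l).
Proof. by move=> H1 H2; apply: PAdd => //; apply: PolyN. Qed.

Lemma Poly_sum i d I (r : seq I) (F : I -> nat -> nat -> A) :
  (forall x, BPoly i d (F x)) -> BPoly i d (fun m l => \sum_(x <- r) F x m l).
Proof.
move=> H; elim: r => [|x r IH].
  by apply: PolyZ => m l; rewrite big_nil.
by apply: (PExt _ (PAdd (H x) IH)) => m l; rewrite big_cons.
Qed.

Lemma Poly_shift i d a b F : BPoly (i + a + b) d F -> BPoly i d (fun m l => F m l *+ (m ^ a * l ^ b)%N).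
Proof.
elim=> [u a' b' H1 H2|F1 G1 _ H1 _ H2|F1 G1 E _ H].
- apply: (PExt (F := fun m l => u *+ (m ^ (a' + a) * l ^ (b' + b))%N)).
    by move=> m l; rewrite -mulrnA !expnD; congr (_ *+ _); rewrite mulnACA.
  by apply: PMono => //; apply: Lle H1; lia.
- by apply: (PExt _ (PAdd H1 H2)) => m l; rewrite mulrnDl.
- by apply: (PExt _ H) => m l; rewrite E.
Qed.

Lemma Poly_starl j j' v i d F : L j v -> L j' v -> BPoly i d F ->
  BPoly (j + i) (j' + d) (fun m l => st v (F m l)).
Proof.
move=> Hv Hv'; elim=> [u a b H1 H2|F1 G1 _ H1 _ H2|F1 G1 E _ H].
- apply: (PExt (F := fun m l => (st v u) *+ (m ^ a * l ^ b)%N)); first by move=> m l; rewrite (stMn Hb).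
  apply: PMono; last exact: Lmul.
  by have := Lmul Hv H1; rewrite !addnA.
- by apply: (PExt _ (PAdd H1 H2)) => m l; rewrite (stD Hb).
- by apply: (PExt _ H) => m l; rewrite E.
Qed.

Lemma Poly_iter s s' v r i d F : L s v -> L s' v -> BPoly i d F ->
  BPoly (i + r * s) (d + r * s') (fun m l => iter r (st v) (F m l)).
Proof.
move=> Hv Hv' HF; elim: r => [|r IH]; first by rewrite !mul0n !addn0.
have := Poly_starl Hv Hv' IH.
have -> : (s + (i + r * s) = i + r.+1 * s)%N by rewrite mulSn; lia.
have -> : (s' + (d + r * s') = d + r.+1 * s')%N by rewrite mulSn; lia.
by apply: PExt => m l; rewrite iterS.
Qed.

Variable p : nat.
Hypothesis Hinv : forall t, (0 < t < p)%N -> exists M, forall v : A, v *+ (t * M) = v.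

Lemma Poly_bin t a b i d F : (t < p)%N -> BPoly (i + t * (a + b)) d F ->
  BPoly i d (fun m l => F m l *+ 'C(m ^ a * l ^ b, t)).
Proof.
move=> tp; elim=> [u a' b' H1 H2|F1 G1 _ H1 _ H2|F1 G1 E _ H]; last first.
- by apply: (PExt _ H) => m l; rewrite E.
- by apply: (PExt _ (PAdd H1 H2)) => m l; rewrite mulrnDl.
pose S := fun w => L (i + t * (a + b) + a' + b') w /\ L d w.
have S0 : S 0 by split; apply: L0.
have SD : forall x y, S x -> S y -> S (x + y) by move=> x y [? ?] [? ?]; split; apply: LD.
have SN : forall x, S x -> S (- x) by move=> x [? ?]; split; apply: LN.
have := UP_bin S0 SD SN Hinv tp (conj H1 H2).
set g := fun N => _.
move=> HU.
suff : BPoly i d (fun m l => g (m ^ a * l ^ b)%N *+ (m ^ a' * l ^ b')%N).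
  by apply: PExt => m l; rewrite /g -!mulrnA mulnC.
elim: HU => [w r [Sw1 Sw2] rt|g1 h1 _ IH1 _ IH2|g1 h1 E _ IH].
- apply: (PExt (F := fun m l => w *+ (m ^ (a * r + a') * l ^ (b * r + b'))%N)).
    by move=> m l; rewrite -mulrnA expnMn -!expnM !expnD; congr (_ *+ _); rewrite mulnACA [(a * r)%N]mulnC [(b * r)%N]mulnC.
  apply: PMono => //; apply: Lle Sw1.
  have : (r * (a + b) <= t * (a + b))%N by apply: leq_mul.
  lia.
- by apply: (PExt _ (PAdd IH1 IH2)) => m l; rewrite mulrnDl.
- by apply: (PExt _ IH) => m l; rewrite E.
Qed.

End BPoly.

Section Core.
Variable A : zmodType.
Variable circ : A -> A -> A.
Local Notation st := (bstar circ).
Local Notation L := (bpow circ).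
Local Notation lam := (lam circ).
Hypothesis Hb : is_brace circ.
Variable k : nat.
Hypothesis Hk : is_zero_set (bpow circ k).

Lemma Lzero s x : (k <= s)%N -> L s x -> x = 0.
Proof. by move=> ks Hx; apply: Hk; apply: Lle Hx. Qed.

Lemma allzero : k = 0%N -> forall x : A, x = 0.
Proof. by move=> k0 x; apply: Hk; rewrite k0. Qed.

Lemma iter_zero s x h r : (0 < s)%N -> (k <= r)%N -> L s x -> iter r (st x) h = 0.
Proof.
move=> s0 kr Hx; apply: (@Lzero (0 + r * s)%N); last by apply: Liter => //; apply: L01.
by rewrite add0n; apply: leq_trans kr _; rewrite leq_pmulr.
Qed.

Lemma lamn_bin s x w N : (0 < s)%N -> L s x ->
  iter N (lam x) w = \sum_(t < k) iter t (st x) w *+ 'C(N, t).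
Proof.
move=> s0 Hx; have [k0|kp] := posnP k; first by rewrite k0 big_ord0; apply: allzero.
move: kp (@iter_zero); case: k Hk => [|k'] _ kp Hz //.
elim: N => [|N IH].
  rewrite big_ord_recl /= mulr1n big1 ?addr0 // => t _.
rewrite iterS IH lam_sum //.
under eq_bigr => t _ do rewrite (lamMn Hb) (lamE circ) mulrnDl.
rewrite big_split /= [X in _ + X = _]big_ord_recr /= -iterS (Hz s x w k'.+1) // mul0rn addr0.
rewrite [in RHS]big_ord_recl [X in X + _ = _]big_ord_recl /= !bin0.
under [in RHS]eq_bigr => t _ do rewrite binS mulrnDr.
rewrite big_split /= -!addrA; by congr (_ + _); congr (_ + _).
Qed.

Definition cpow N x := iter N (circ x) 0.

Lemma lam_cpow N x w : lam (cpow N x) w = iter N (lam x) w.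
Proof.
elim: N => [|N IH]; first by rewrite /= (lamE circ) (st0l Hb) addr0.
by rewrite /cpow iterS (lam_circ Hb) -/(cpow N x) IH.
Qed.

Lemma cpow_bin s x N : (0 < s)%N -> L s x ->
  cpow N x = \sum_(t < k) iter t (st x) x *+ 'C(N, t.+1).
Proof.
move=> s0 Hx; have [k0|kp] := posnP k; first by rewrite k0 big_ord0; apply: allzero.
move: kp (@iter_zero); case: k Hk => [|k'] _ kp Hz //.
elim: N => [|N IH].
  by rewrite big1 // => t _; rewrite bin0n /= mulr0n.
rewrite /cpow iterS -/(cpow N x) (circE circ) IH lam_sum //.
under eq_bigr => t _ do rewrite (lamMn Hb) (lamE circ) mulrnDl -iterS.
under [in RHS]eq_bigr => t _ do rewrite binS mulrnDr.
rewrite big_split /= [in RHS]big_split /= addrCA; congr (_ + _).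
rewrite [in RHS]big_ord_recl /= bin0 mulr1n big_ord_recr /= -iterS (Hz s x x k'.+1) // mul0rn addr0.
by congr (_ + _); apply: eq_bigr => t _; rewrite /bump /= add1n.
Qed.

Lemma iter_lam_inv x x' N v : circ x x' = 0 ->
  iter N (lam x) (iter N (lam x') v) = v.
Proof.
move=> H; elim: N => [|N IH] //.
by rewrite iterSr [iter N.+1 (lam x') v]iterS (lam_inv Hb).
Qed.

Variable p : nat.
Hypothesis Hinv : forall t, (0 < t < p)%N -> exists M, forall v : A, v *+ (t * M) = v.
Hypothesis Hkp : (k < p)%N.

Definition zi x h := iter k.+1 (fun z => h - st x z) 0.

Lemma lam_zi x h : lam x (zi x h) = h.
Proof.
set f := fun z => h - st x z.
have D : forall n, L n.+1 (iter n.+1 f 0 - iter n f 0).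
  elim=> [|n IH]; first by apply: L01.
  set a := iter n.+1 f 0 in IH *; set b := iter n f 0 in IH *.
  have -> : iter n.+2 f 0 - a = f a - f b by [].
  rewrite /f; clearbody a b.
  have -> : h - st x a - (h - st x b) = - st x (a - b).
    by rewrite (stB Hb) opprB subBB.
  apply: LN; have := Lmul (i := 1) (j := n.+1) (L01 circ x (leqnn 1)) IH; by rewrite add1n.
have E : iter k.+2 f 0 = iter k.+1 f 0.
  by apply/eqP; rewrite -subr_eq0; apply/eqP; apply: (Lzero (s := k.+2)); [lia | exact: D].
have Ez : h - st x (zi x h) = zi x h := E.
by rewrite (lamE circ) -{1}Ez subrK.
Qed.

Definition CoreP i d (F : nat -> nat -> A) := forall w j j', L j w -> L j' w ->
  BPoly circ (i + j) (d + j') (fun m l => st (F m l) w).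

Lemma Gen i d F i2 d2 G : CoreP i d F -> BPoly circ i2 d2 G ->
  BPoly circ (i + i2) (d + d2) (fun m l => st (F m l) (G m l)).
Proof.
move=> HF; elim=> [v a b H1 H2|F1 G1 _ IH1 _ IH2|F1 G1 E _ IH].
- apply: (PExt (F := fun m l => st (F m l) v *+ (m ^ a * l ^ b)%N)).
    by move=> m l; rewrite (stMn Hb).
  by apply: Poly_shift; rewrite -!addnA; apply: HF => //; rewrite !addnA.
- by apply: (PExt _ (PAdd IH1 IH2)) => m l; rewrite (stD Hb).
- by apply: (PExt _ IH) => m l; rewrite E.
Qed.

Lemma Poly_zi i d d' F1 F2 : CoreP i d F1 -> BPoly circ i d' F2 ->
  BPoly circ i d' (fun m l => zi (F1 m l) (F2 m l)).
Proof.
move=> H1 H2; rewrite /zi; elim: k.+1 => [|n IH]; first by apply: PolyZ.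
apply: (PExt (F := fun m l => F2 m l - st (F1 m l) (iter n (fun z => F2 m l - st (F1 m l) z) 0))).
  by move=> m l; rewrite iterS.
apply: PolyB => //; apply: Poly_le (Gen H1 IH); lia.
Qed.

Lemma Poly_ziE i d d' F1 F2 : CoreP i d F1 -> (0 < d)%N -> BPoly circ i d' F2 ->
  BPoly circ i d'.+1 (fun m l => zi (F1 m l) (F2 m l) - F2 m l).
Proof.
move=> H1 d0 H2.
have H3 : BPoly circ i d' (fun m l => iter k (fun z => F2 m l - st (F1 m l) z) 0).
  elim: k => [|n IH]; first by apply: PolyZ.
  apply: (PExt (F := fun m l => F2 m l - st (F1 m l) (iter n (fun z => F2 m l - st (F1 m l) z) 0))).
    by move=> m l; rewrite iterS.
  apply: PolyB => //; apply: Poly_le (Gen H1 IH); lia.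
apply: (PExt (F := fun m l => - st (F1 m l) (iter k (fun z => F2 m l - st (F1 m l) z) 0))).
  by move=> m l; rewrite /zi iterS addrAC subrr add0r.
by apply: PolyN; apply: Poly_le (Gen H1 H3); lia.
Qed.

Lemma inv_L s u u' : circ u u' = 0 -> L s u -> L s u'.
Proof.
move=> H Hu.
have -> : u' = - (u + st u u').
  by apply/eqP; rewrite -addr_eq0 -H (circE circ) (lamE circ) addrCA.
apply: LN; apply: LD => //; have := Lmul Hu (L01 circ u' (leq0n 1)); by rewrite addn0.
Qed.

Lemma Core_mono i d u a b : (0 < d)%N ->
  (forall F, BPoly circ i d.+1 F -> CoreP i d.+1 F) ->
  L (i + a + b) u -> L d u -> CoreP i d (fun m l => u *+ (m ^ a * l ^ b)%N).
Proof.
move=> d0 IH' H1 H2 w j j' Hw Hw'.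
have [k0|kp] := posnP k; first by apply: PolyZ => m l; apply: allzero.
have [u' [Hu1 Hu2]] := circ_inv Hb u.
have H1' := inv_L Hu1 H1; have H2' := inv_L Hu1 H2.
set s := (i + a + b)%N.
pose N m l := (m ^ a * l ^ b)%N.
pose E' m l := u *+ N m l - cpow (N m l) u.
pose z m l := iter (N m l) (lam u') (E' m l).
move: kp (@iter_zero) (@lamn_bin) (@cpow_bin).
case: k Hk Hkp => [|k'] _ kp' _ Hz Hlb Hcb //.
have HE : BPoly circ i d.+1 E'.
  apply: (PExt (F := fun m l => - \sum_(t < k') iter t.+1 (st u) u *+ 'C(N m l, t.+2))).
    move=> m l; rewrite /E' (Hcb d u (N m l)) // big_ord_recl /= bin1.
    by rewrite opprD addrA subrr add0r.
  apply: PolyN; apply: Poly_sum => t; apply: (Poly_bin Hinv); first by have := ltn_ord t; lia.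
  apply: Poly_const.
  - apply: (Lle (s' := (s + t.+1 * s)%N)); last by apply: Liter.
    rewrite /s; nia.
  - apply: (Lle (s' := (d + t.+1 * d)%N)); last by apply: Liter.
    nia.
have HZ : BPoly circ i d.+1 z.
  apply: (PExt (F := fun m l => \sum_(t < k'.+1) iter t (st u') (E' m l) *+ 'C(N m l, t))).
    by move=> m l; rewrite /z (Hlb d u').
  apply: Poly_sum => t; apply: (Poly_bin Hinv); first by have := ltn_ord t; lia.
  apply: Poly_le (Poly_iter Hb t H1' H2' HE); first by rewrite /s; nia.
  lia.
have HQ := IH' z HZ w j j' Hw Hw'.
have HL : BPoly circ (i + j) (d + j')
    (fun m l => \sum_(t < k'.+1) iter t (st u) (st (z m l) w) *+ 'C(N m l, t)).
  apply: Poly_sum => t; apply: (Poly_bin Hinv); first by have := ltn_ord t; lia.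
  apply: Poly_le (Poly_iter Hb t H1 H2 HQ); first by rewrite /s; nia.
  lia.
have HX : BPoly circ (i + j) (d + j')
    (fun m l => \sum_(t < k') iter t.+1 (st u) w *+ 'C(N m l, t.+1)).
  apply: Poly_sum => t; apply: (Poly_bin Hinv); first by have := ltn_ord t; lia.
  apply: Poly_const.
  - apply: (Lle (s' := (j + t.+1 * s)%N)); last by apply: Liter.
    rewrite /s; nia.
  - apply: (Lle (s' := (j' + t.+1 * d)%N)); last by apply: Liter.
    nia.
apply: (PExt _ (PAdd HX HL)) => m l.
have Hlz : lam (cpow (N m l) u) (z m l) = E' m l.
  by rewrite lam_cpow /z iter_lam_inv.
have -> : u *+ (m ^ a * l ^ b)%N = cpow (N m l) u + E' m l by rewrite /E' addrC subrK.
rewrite (st_sumf Hb w Hlz) lam_cpow (Hlb d u) // [st (cpow _ _) w]stE lam_cpow (Hlb d u) //.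
rewrite [X in _ = X - _ + _]big_ord_recl /= bin0 mulr1n addrAC.
by rewrite [RHS]addrAC [w + _]addrC addrK.
Qed.

Theorem Core e : forall d, (k <= d + e)%N -> (0 < d)%N ->
  forall i F, BPoly circ i d F -> CoreP i d F.
Proof.
elim: e => [|e IHe] d kd d0 i F HF.
  move=> w j j' Hw Hw'; apply: PolyZ => m l.
  have [_ Hd] := Poly_val m l HF.
  by rewrite addn0 in kd; rewrite (Lzero kd Hd) (st0l Hb).
have IH' : forall F, BPoly circ i d.+1 F -> CoreP i d.+1 F.
  by move=> G HG; apply: IHe => //; lia.
elim: HF => [u a b H1 H2|F1 F2 HF1 IH1 HF2 IH2|F1 G1 E _ IH].
- exact: Core_mono.
- move=> w j j' Hw Hw'.
  pose Z m l := zi (F1 m l) (F2 m l).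
  pose E m l := Z m l - F2 m l.
  have HE : BPoly circ i d.+1 E := Poly_ziE IH1 d0 HF2.
  pose Z2 m l := zi (F2 m l) (E m l).
  have HZ2 : BPoly circ i d.+1 Z2 := Poly_zi IH2 HE.
  have C2 := IH' Z2 HZ2 w j j' Hw Hw'.
  pose Q m l := st (Z2 m l) w.
  have HQ : BPoly circ (i + j) (d + j') Q by apply: Poly_le C2 => //; lia.
  have HZw : BPoly circ (i + j) (d + j') (fun m l => st (Z m l) w).
    apply: (PExt (F := fun m l => st (F2 m l) w + (Q m l + st (F2 m l) (Q m l)))).
      move=> m l; have := st_sumf Hb w (lam_zi (F2 m l) (E m l)).
      by rewrite /E addrC subrK (lamE circ) => ->.
    apply: PAdd; first exact: IH2.
    apply: PAdd => //; apply: Poly_le (Gen IH2 HQ); lia.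
  apply: (PExt (F := fun m l => st (F1 m l) w + (st (Z m l) w + st (F1 m l) (st (Z m l) w)))).
    move=> m l; have := st_sumf Hb w (lam_zi (F1 m l) (F2 m l)).
    by rewrite (lamE circ) => ->.
  apply: PAdd; first exact: IH1.
  apply: PAdd => //; apply: Poly_le (Gen IH1 HZw); lia.
- move=> w j j' Hw Hw'; by apply: (PExt _ (IH w j j' Hw Hw')) => m l; rewrite E.
Qed.

End Core.

Section Avg.
Variable A : zmodType.
Variable circ : A -> A -> A.
Local Notation L := (bpow circ).
Variable k : nat.
Hypothesis Hk : is_zero_set (bpow circ k).
Variables p xi : nat.
Hypothesis HV : forall t (v : A), (2 <= t < k)%N ->
  \sum_(i < p.-1) v *+ ((xi ^ i) ^ t * xi ^ (p.-1 - i))%N = 0.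

Definition Avgd (F : nat -> nat -> A) := \sum_(i < p.-1) F (xi ^ i)%N (xi ^ i)%N *+ (xi ^ (p.-1 - i))%N.
Definition Avg1 (F : nat -> nat -> A) := \sum_(i < p.-1) F (xi ^ i)%N 0%N *+ (xi ^ (p.-1 - i))%N.
Definition Avg2 (F : nat -> nat -> A) := \sum_(i < p.-1) F 0%N (xi ^ i)%N *+ (xi ^ (p.-1 - i))%N.
Definition S0 := (\sum_(i < p.-1) xi ^ (p.-1 - i))%N.

Lemma AvgE (F G : nat -> nat -> A) : (forall m l, F m l = G m l) ->
  [/\ Avgd F = Avgd G, Avg1 F = Avg1 G & Avg2 F = Avg2 G].
Proof. by move=> E; split; apply: eq_bigr => i _; rewrite E. Qed.

Lemma AvgD (F G : nat -> nat -> A) :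
  [/\ Avgd (fun m l => F m l + G m l) = Avgd F + Avgd G,
      Avg1 (fun m l => F m l + G m l) = Avg1 F + Avg1 G &
      Avg2 (fun m l => F m l + G m l) = Avg2 F + Avg2 G].
Proof.
by split; rewrite -big_split; apply: eq_bigr => i _; rewrite mulrnDl.
Qed.

Lemma avg d F : BPoly circ 0 d F -> Avgd F + F 0%N 0%N *+ S0 = Avg1 F + Avg2 F.
Proof.
elim=> [u a b H1 H2|F1 G1 _ IH1 _ IH2|F1 G1 E _ IH]; last first.
- by have [<- <- <-] := AvgE E; rewrite -E.
- have [-> -> ->] := AvgD F1 G1.
  by rewrite mulrnDl addrACA IH1 IH2 addrACA.
have [ka|ak] := leqP k (a + b).
  have u0 : u = 0 by apply: (Lzero Hk (s := (0 + a + b)%N)) => //; lia.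
  by rewrite /Avgd /Avg1 /Avg2 u0 !mul0rn !big1 ?addr0 // => i _; rewrite !mul0rn.
have [ab2|ab1] := leqP 2 (a + b).
  have Hd : Avgd (fun m l => u *+ (m ^ a * l ^ b)%N) = 0.
    rewrite /Avgd; apply: eq_trans (HV u (t := (a + b)%N) _); last lia.
    by apply: eq_bigr => i _; rewrite -mulrnA -expnD.
  have Hz : u *+ (0 ^ a * 0 ^ b)%N = 0.
    have [a0|a0] := posnP a.
      have b0 : (0 < b)%N by lia.
      by rewrite (exp0n b0) muln0 mulr0n.
    by rewrite (exp0n a0) mul0n mulr0n.
  have H1' : Avg1 (fun m l => u *+ (m ^ a * l ^ b)%N) = 0.
    case: b {H1 Hd Hz} ab2 ak => [|b] ab2 ak; last first.
      by rewrite /Avg1 big1 // => i _; rewrite exp0n // muln0 mulr0n mul0rn.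
    rewrite /Avg1; apply: eq_trans (HV u (t := a) _); last lia.
    by apply: eq_bigr => i _; rewrite expn0 muln1 -mulrnA.
  have H2' : Avg2 (fun m l => u *+ (m ^ a * l ^ b)%N) = 0.
    case: a {H1 Hd Hz H1'} ab2 ak => [|a] ab2 ak; last first.
      by rewrite /Avg2 big1 // => i _; rewrite exp0n // mul0n mulr0n mul0rn.
    rewrite /Avg2; apply: eq_trans (HV u (t := b) _); last lia.
    by apply: eq_bigr => i _; rewrite expn0 mul1n -mulrnA.
  by rewrite Hd H1' H2' Hz mul0rn !addr0.
case: a H1 ak ab1 => [|[|a]] H1 ak ab1; case: b H1 ak ab1 => [|[|b]] H1 ak ab1 //; try lia.
- by rewrite /Avgd /Avg1 /Avg2 /S0 sumrMnr !expn0 muln1 mulr1n.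
- rewrite /Avgd /Avg1 /Avg2 ?expn0 ?expn1 ?mul1n ?muln1 ?mul0n ?muln0 ?mulr0n ?mul0rn ?addr0.
  rewrite [X in _ = X + _]big1 ?add0r; last by move=> i _; rewrite ?mul0rn ?mulr0n.
  by apply: eq_bigr => i _; rewrite expn0.
- rewrite /Avgd /Avg1 /Avg2 ?expn0 ?expn1 ?mul1n ?muln1 ?mul0n ?muln0 ?mulr0n ?mul0rn ?addr0.
  rewrite [X in _ = _ + X]big1 ?addr0; last by move=> i _; rewrite ?mul0rn ?mulr0n.
  by apply: eq_bigr => i _; rewrite expn0.
Qed.

End Avg.

From mathcomp Require Import fingroup cyclic finalg.

Lemma cardA0 (A : finZmodType) (x : A) : x *+ #|A| = 0.
Proof.
have := @expg_cardG _ [set: A] x.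
by rewrite FinRing.Theory.zmodXgE cardsT inE => ->.
Qed.

Lemma NT p g t : prime p -> primitive_root_mod (p ^ p) g -> (2 <= t)%N -> (t < p)%N ->
  (p ^ p %| \sum_(i < p.-1) ((g ^ (p ^ p.-1)) ^ i) ^ t * (g ^ (p ^ p.-1)) ^ (p.-1 - i))%N.
Proof.
move=> pp [cg Hg] t2 tp.
set M := (p ^ p)%N; set xi := (g ^ (p ^ p.-1))%N; set y := (xi ^ t.-1)%N.
have p1 := prime_gt1 pp.
have M1 : (1 < M)%N by rewrite /M -{1}(expn0 p) ltn_exp2l //; lia.
have g0 : (0 < g)%N.
  case: (posnP g) => [g0'|//]; exfalso; move: cg M1.
  by rewrite g0' /coprime gcd0n /M => /eqP ->.
have y0 : (0 < y)%N by rewrite /y /xi !expn_gt0 g0.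
have -> : (\sum_(i < p.-1) (xi ^ i) ^ t * xi ^ (p.-1 - i) = xi ^ p.-1 * \sum_(i < p.-1) y ^ i)%N.
  rewrite big_distrr /=; apply: eq_bigr => i _.
  rewrite /y -!expnM -!expnD -!mulnDr; congr (g ^ (_ * _))%N; have := ltn_ord i; nia.
apply: dvdn_mull.
have totM : totient M = (p.-1 * p ^ p.-1)%N by rewrite /M totient_pfactor //; lia.
have Hxi : (xi ^ p.-1 = 1 %[mod M])%N.
  by rewrite /xi -expnM mulnC -totM Euler_exp_totient.
have Hy : (y ^ p.-1 = 1 %[mod M])%N.
  by rewrite /y -expnM mulnC expnM -modnXm Hxi modnXm exp1n.
have Dy : (M %| y.-1 * \sum_(i < p.-1) y ^ i)%N.
  rewrite -predn_exp -subn1 -eqn_mod_dvd ?Hy //.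
  by rewrite expn_gt0 y0.
have [cop|ncop] := boolP (coprime y.-1 p).
  by rewrite -(@Gauss_dvdr M y.-1) // coprime_sym /M coprimeXr.
exfalso.
have py : (p %| y.-1)%N by move: ncop; rewrite coprime_sym prime_coprime // negbK.
have ymod : (y = 1 %[mod p])%N.
  by apply/eqP; rewrite eqn_mod_dvd // subn1.
have Smod : ((\sum_(i < p.-1) y ^ i) %% p = p.-1)%N.
  rewrite -modn_summ (eq_bigr (fun _ => 1%N)) => [|i _]; last first.
    by rewrite -modnXm ymod modnXm exp1n modn_small.
  by rewrite sum_nat_const card_ord muln1 modn_small // ltn_predL (ltnW p1).
have cS : coprime M (\sum_(i < p.-1) y ^ i).
  rewrite /M coprimeXl // prime_coprime //; apply/negP => /dvdnP [q Hq].
  move: Smod; rewrite Hq modnMl => H.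
  have : (0 < p.-1)%N by rewrite -subn1 subn_gt0.
  by rewrite -H.
have My : (M %| y.-1)%N by rewrite -(@Gauss_dvdl M _ _ cS).
have Hgy : (g ^ (p ^ p.-1 * t.-1) %% M = 1 %% M)%N.
  by rewrite expnM -/xi -/y; apply/eqP; rewrite eqn_mod_dvd // subn1.
apply: (Hg (p ^ p.-1 * t.-1)%N) => //.
  by rewrite muln_gt0 expn_gt0 (ltnW p1) /=; clear -t2; lia.
rewrite totM mulnC ltn_pmul2r ?expn_gt0 ?(ltnW p1) //; clear -tp t2; lia.
Qed.

Theorem proposition4 (p n k : nat) (A : finZmodType) (circ : A -> A -> A)
  (gamma : nat) :
  prime p -> (n.+1 < p)%N -> (k < p)%N ->
  is_brace circ -> #|A| = (p ^ n)%N ->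
  strongly_nilpotent circ -> nilpotency_index circ k ->
  primitive_root_mod (p ^ p) gamma ->
  let xi := (gamma ^ (p ^ p.-1))%N in
  forall a b c : A,
    bdot circ p xi (a + b) c = bdot circ p xi a c + bdot circ p xi b c /\
    bdot circ p xi a (b + c) = bdot circ p xi a b + bdot circ p xi a c.
Proof.
move=> pp np kp Hb HA _ [Hk _] Hprim xi a b c.
have Hcard : forall v : A, v *+ (p ^ n)%N = 0 by move=> v; rewrite -HA cardA0.
have Hinv : forall t, (0 < t < p)%N -> exists M, forall v : A, v *+ (t * M) = v.
  move=> t /andP [t0 tp].
  have cop : coprime t (p ^ n).
    rewrite coprimeXr // coprime_sym prime_coprime //; apply/negP => /(dvdn_leq t0).
    by rewrite leqNgt tp.
  case: (egcdnP (p ^ n) t0) => km kn Hkm _.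
  rewrite (eqP cop) in Hkm.
  exists km => v; rewrite mulnC Hkm mulrnDr mulr1n mulnC mulrnA Hcard mul0rn.
  by rewrite add0r.
have HV : forall t (v : A), (2 <= t < k)%N ->
    \sum_(i < p.-1) v *+ ((xi ^ i) ^ t * xi ^ (p.-1 - i))%N = 0.
  move=> t v /andP [t2 tk]; rewrite sumrMnr.
  have := NT pp Hprim t2 (ltn_trans tk kp); rewrite -/xi => Hd.
  have Hd' : (p ^ n %| \sum_(i < p.-1) (xi ^ i) ^ t * xi ^ (p.-1 - i))%N.
    apply: dvdn_trans Hd; rewrite dvdn_exp2l //; apply: ltnW; apply: ltn_trans np.
    by [].
  case/dvdnP: Hd' => q ->.
  by rewrite mulrnA Hcard.
have HF : BPoly circ 0 1 (fun m l => a *+ m + b *+ l).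
  apply: PAdd.
    apply: (PExt (F := fun m l => a *+ (m ^ 1 * l ^ 0)%N)) => [m l|].
      by rewrite expn1 expn0 muln1.
    by apply: PMono; apply: L01.
  apply: (PExt (F := fun m l => b *+ (m ^ 0 * l ^ 1)%N)) => [m l|].
    by rewrite expn1 expn0 mul1n.
  by apply: PMono; apply: L01.
have HG := Core Hb Hk Hinv kp (leq_addl 1 k) (isT : (0 < 1)%N) HF
  (L01 circ c (leq0n 1)) (L01 circ c (leq0n 1)).
have Havg := avg Hk HV HG.
split; last first.
  rewrite /bdot -big_split; apply: eq_bigr => i _.
  by rewrite (stD Hb) mulrnDl.
move: Havg; rewrite /Avgd /Avg1 /Avg2 !mulr0n addr0 (st0l Hb) mul0rn addr0 => E.
rewrite /bdot -[X in _ = X + _](eq_bigr _ (fun i _ => congr1 (fun z => bstar circ z c *+ _) (addr0 _))).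
rewrite -[X in _ = _ + X](eq_bigr _ (fun i _ => congr1 (fun z => bstar circ z c *+ _) (add0r _))).
rewrite -E; apply: eq_bigr => i _; by rewrite [(a + b) *+ _]mulrnDl.
Qed.
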